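(* Let $\Lambda=\Lambda(V^* )$, $V=\mathbb{C}^n$, and $W=\mathrm{der}(\Lambda)$ carry the gradings of type $\vec k=(k_1,\dots,k_m)$, with depths $d(\Lambda)$ and $d(W)$. (i) The grading of $\Lambda$ has depth $d(\Lambda)=1$ if and only if $\vec k=(-1,k_2,\dots,k_m)$ and $\dim U^{-1}=1$; in this case $d(W)=k_m+1$. (ii) The grading of $\Lambda$ has depth $d(\Lambda)=0$ if and only if $k_1\ge 0$. Moreover, when $d(\Lambda)=0$: $d(W)=0$ if and only if $\vec k=(0)$, and $d(W)=1$ if and only if $\vec k=(0,1)$ or $\vec k=(1)$.
   Context: Grading of type $\vec k$: a decomposition $U=V^*=U^{k_1}\oplus\cdots\oplus U^{k_m}$ with integers $k_1<\cdots<k_m$ and $n_i=\dim U^{k_i}>0$ induces $V^{-k_i}=(U^{k_i})^*$, the grading $\Lambda^p=\bigoplus_{p_1k_1+\cdots+p_mk_m=p}\Lambda^{p_1}(U^{k_1})\cdots\Lambda^{p_m}(U^{k_m})$ of $\Lambda$ (where $\Lambda^{p_i}(U^{k_i})$ denotes exterior forms of polynomial degree $p_i$ on $U^{k_i}$), and the grading $W^q=\bigoplus_{p-k_i=q}\Lambda^p\partial_{V^{-k_i}}$ of $W=\Lambda\otimes\partial_V$. A graded space $A=\bigoplus A^p$ has depth $d$ if $A^{-d}\neq0$ and $A^{p}=0$ for all $p<-d$. *)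

(* Defs.v *)
From mathcomp Require Import all_boot all_order all_algebra.
Set Implicit Arguments. Unset Strict Implicit. Unset Printing Implicit Defensive.
Import Order.TTheory GRing.Theory Num.Theory.
Local Open Scope ring_scope.

(* A grading of type k = (k_1 < ... < k_m) of U = V^* = C^n is the data of
   the sequence k : seq int (the degrees) and the sequence n : seq nat of
   dimensions n_i = dim U^{k_i} > 0 (so n = sum n_i).  The graded pieces of
   Lambda = Lambda(U) and W = Lambda (x) d_V are finite-dimensional complex
   vector spaces, determined up to isomorphism by their dimensions, which we
   compute from the defining direct-sum decompositions:

   Lambda^p = (+)_{p_1 k_1 + ... + p_m k_m = p} Lambda^{p_1}(U^{k_1}) ... Lambda^{p_m}(U^{k_m}),
   dim Lambda^{p_i}(U^{k_i}) = 'C(n_i, p_i)  (zero when p_i > n_i).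

   Tuples (p_1,...,p_m) range over p_i <= max_j n_j, which loses nothing since
   'C(n_i,p_i) = 0 for p_i > n_i. *)

Definition nmax (n : seq nat) : nat := (\max_(x <- n) x)%N.

Definition dimLam (k : seq int) (n : seq nat) (p : int) : nat :=
  (\sum_(f : {ffun 'I_(size k) -> 'I_(nmax n).+1}
          | ((\sum_(i < size k) (f i : nat)%:Z * k`_i)%R == p))
     \prod_(i < size k) 'C(nth 0%N n i, f i))%N.

(* W^q = (+)_{i, p - k_i = q} Lambda^p d_{V^{-k_i}}, and d_{V^{-k_i}} has
   dimension dim V^{-k_i} = n_i. *)
Definition dimW (k : seq int) (n : seq nat) (q : int) : nat :=
  (\sum_(i < size k) dimLam k n (q + k`_i) * nth 0%N n i)%N.

Definition has_depth (dimA : int -> nat) (d : int) : Prop :=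
  dimA (- d) <> 0%N /\ forall p : int, p < - d -> dimA p = 0%N.

(* Main.v *)
Require Import Defs.
From mathcomp Require Import all_boot all_order all_algebra.
From mathcomp Require Import ring lra zify.
Import Order.TTheory GRing.Theory Num.Theory.
Local Open Scope ring_scope.

Definition mwt (k : seq int) (n : seq nat) (i : nat) : int :=
  (if k`_i < 0 then nth 0%N n i else 0%N)%:Z * k`_i.

Definition mw (k : seq int) (n : seq nat) : int :=
  \sum_(i < size k) mwt k n i.

Lemma nth_le_nmax (n : seq nat) i : (nth 0%N n i <= nmax n)%N.
Proof.
rewrite /nmax; case: (ltnP i (size n)) => h.
  by apply: (leq_bigmax_seq (F := id)) => //; apply: mem_nth.
by rewrite nth_default.
Qed.

Lemma dimLam_low k n p : p < mw k n -> dimLam k n p = 0%N.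
Proof.
move=> hp; rewrite /dimLam big1 // => f /eqP hw.
case: (boolP [forall i, (f i <= nth 0%N n i)%N]) => [/forallP hf|].
  exfalso; move: hp; rewrite -hw /mw; apply/negP; rewrite -leNgt.
  apply: ler_sum => i _; rewrite /mwt.
  have := hf i; case: ifP => hk hfi.
    have : ((f i : nat)%:Z <= (nth 0%N n i)%:Z) by rewrite lez_nat.
    move: hk; set a := k`_i; set b := ((f i : nat)%:Z); set c := (nth 0%N n i)%:Z.
    move=> ha hbc; nra.
  move: hk => /negbT; rewrite -leNgt => hk.
  by rewrite mul0r mulr_ge0.
rewrite negb_forall => /existsP [i]; rewrite -ltnNge => hi.
by rewrite (bigD1 i) //= bin_small // mul0n.
Qed.

Lemma dimLam_mw k n : dimLam k n (mw k n) <> 0%N.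
Proof.
pose f0 : {ffun 'I_(size k) -> 'I_(nmax n).+1} :=
  [ffun i : 'I_(size k) => inord (if k`_i < 0 then nth 0%N n i else 0%N)].
have f0E i : (f0 i : nat) = (if k`_i < 0 then nth 0%N n i else 0%N).
  rewrite ffunE inordK // ltnS; case: ifP => // _; exact: nth_le_nmax.
rewrite /dimLam (bigD1 f0) /=; last first.
  apply/eqP; rewrite /mw; apply: eq_bigr => i _; by rewrite f0E.
suff -> : (\prod_(i < size k) 'C(nth 0%N n i, f0 i) = 1)%N by [].
by apply: big1 => i _; rewrite f0E; case: ifP => _; rewrite ?binn ?bin0.
Qed.

Lemma depth_char (D : int -> nat) m d :
  (forall p, p < m -> D p = 0%N) -> D m <> 0%N -> (has_depth D d <-> d = - m).
Proof.
move=> hlow hm; split.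
  case=> h1 h2.
  have hle : m <= - d by rewrite leNgt; apply/negP => /hlow.
  case: (ltrP m (- d)) => [/h2 //|hge].
  have hE : m = - d by apply/eqP; rewrite eq_le hge hle.
  by rewrite hE opprK.
by move=> ->; rewrite /has_depth opprK; split => // p /hlow.
Qed.

Lemma lam_depth k n d : has_depth (dimLam k n) d <-> d = - mw k n.
Proof. by apply: depth_char; [exact: dimLam_low | exact: dimLam_mw]. Qed.

Lemma path_last_all (x : int) s : path <%R x s -> all (fun y => y <= last x s) (x :: s).
Proof.
elim: s x => [|y s IH] x /=; first by rewrite lexx.
move=> /andP [hxy hp]; have := IH y hp => /= /andP [hy ->].
by rewrite hy (le_trans (ltW hxy) hy).
Qed.

Lemma path_last_head (x : int) s : path <%R x s -> x <= last x s.
Proof. by move=> /path_last_all /andP []. Qed.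

Lemma W_depth k n d : (0 < size k)%N -> size n = size k -> all (fun x => 0 < x)%N n ->
  sorted <%R k ->
  (has_depth (dimW k n) d <-> d = last 0 k - mw k n).
Proof.
move=> hm hsz hn hk.
have hmax : forall i, (i < size k)%N -> k`_i <= last 0 k.
  move: hk hm; case: k hsz => [//|k0 k'] hsz /= hk _ i hi.
  have := @path_last_all k0 k' hk => /allP; apply; exact: mem_nth.
have -> : last 0 k - mw k n = - (mw k n - last 0 k) by rewrite opprB.
apply: depth_char.
  move=> p hp; rewrite /dimW big1 // => i _.
  rewrite dimLam_low ?mul0n //.
  have := hmax i (ltn_ord i); lra.
have hlt : ((size k).-1 < size k)%N by rewrite prednK.
pose il : 'I_(size k) := Ordinal hlt.
have hil : (il : nat) = (size k).-1 by [].
rewrite /dimW (bigD1 il) //= nth_last subrK.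
have hpos : (0 < nth 0%N n (size k).-1)%N.
  apply: (allP hn); apply: mem_nth; rewrite hsz prednK //.
case: (dimLam k n (mw k n)) (@dimLam_mw k n) => // c _.
by case: (nth 0%N n _) hpos.
Qed.


Lemma mwt_le0 k n i : mwt k n i <= 0.
Proof.
rewrite /mwt; case: ifP => h; last by rewrite mul0r.
by rewrite mulr_ge0_le0 // ltW.
Qed.

Lemma mw_cons k0 k' n0 n' :
  mw (k0 :: k') (n0 :: n') =
  (if k0 < 0 then n0 else 0%N)%:Z * k0 + \sum_(i < size k') mwt (k0 :: k') (n0 :: n') i.+1.
Proof. by rewrite /mw /= big_ord_recl. Qed.

Lemma rest_le0 k0 k' n0 n' : \sum_(i < size k') mwt (k0 :: k') (n0 :: n') i.+1 <= 0.
Proof. by apply: sumr_le0 => i _; apply: mwt_le0. Qed.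

Lemma rest_0 k0 k' n0 n' : all (fun y => 0 <= y) k' ->
  \sum_(i < size k') mwt (k0 :: k') (n0 :: n') i.+1 = 0.
Proof.
move=> /allP ha; apply: big1 => i _; rewrite /mwt /=.
have : 0 <= k'`_i by apply: ha; apply: mem_nth.
by rewrite leNgt => /negbTE ->; rewrite mul0r.
Qed.

Lemma mw_zero k0 k' n0 n' : path <%R k0 k' -> (0 < n0)%N ->
  (mw (k0 :: k') (n0 :: n') = 0 <-> 0 <= k0).
Proof.
move=> hp hn0; rewrite mw_cons; split.
  move=> h; rewrite leNgt; apply/negP => hk0; move: h; rewrite hk0.
  have := rest_le0 k0 k' n0 n'.
  set r := \sum_(_ < _) _ => hr.
  have : (1 <= n0%:Z) by rewrite lez_nat.
  move=> h1 h2; nra.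
move=> h0; rewrite rest_0.
  by rewrite ltNge h0 mul0r addr0.
have := order_path_min (@lt_trans _ _) hp => /allP ha.
by apply/allP => y /ha hy; exact: le_trans h0 (ltW hy).
Qed.

Lemma mw_m1 k0 k' n0 n' : path <%R k0 k' -> (0 < n0)%N ->
  (mw (k0 :: k') (n0 :: n') = -1 <-> (k0 = -1 /\ n0 = 1%N)).
Proof.
move=> hp hn0; split.
  move=> h.
  have hk0 : k0 < 0.
    rewrite ltNge; apply/negP => /(@mw_zero k0 k' n0 n' hp hn0); by rewrite h.
  move: h; rewrite mw_cons hk0.
  have := rest_le0 k0 k' n0 n'.
  set r := \sum_(_ < _) _ => hr.
  have : (1 <= n0%:Z) by rewrite lez_nat.
  move=> h1 h2.
  have e1 : n0%:Z = 1 by nia.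
  have e2 : k0 = -1 by nia.
  by split => //; move/eqP: e1; rewrite -[1]/(1%N%:Z) eqz_nat => /eqP.
case=> ek en; rewrite mw_cons rest_0.
  by rewrite ek en ltrN10 mul1r addr0.
have := order_path_min (@lt_trans _ _) hp => /allP ha.
apply/allP => y /ha hy; move: hy; rewrite ek => hy; lia.
Qed.

Lemma last_cases (k0 : int) (k' : seq int) : path <%R k0 k' -> 0 <= k0 ->
  (last 0 (k0 :: k') = 0 <-> k0 :: k' = [:: 0])
  /\ (last 0 (k0 :: k') = 1 <-> (k0 :: k' = [:: 0; 1] \/ k0 :: k' = [:: 1])).
Proof.
move=> hp h0 /=; case: k' hp => [|a k''] /=.
  move=> _; split; split.
  - by move=> ->.
  - by case.
  - by move=> ->; right.
  - by case => -[].
move=> /andP [hka hp].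
have hal := @path_last_head a k'' hp.
split; split.
- move=> h; exfalso; move: hal; rewrite h; lra.
- by case.
- move=> hl.
  have ea : a = 1 by move: hal; rewrite hl => hal; lia.
  have ek : k0 = 0 by move: hka; rewrite ea => hka; lia.
  left; rewrite ea ek; clear hal; case: k'' hp hl => [//|b s] /= /andP [hab hp'] hl.
  have hbl := @path_last_head b s hp'.
  exfalso; move: hbl hab; rewrite hl ea => hbl hab; lia.
- by case => -[] // _ -> ->.
Qed.

Theorem lemma3p6 (k : seq int) (n : seq nat)
  (hm : (0 < size k)%N) (hsz : size n = size k)
  (hk : sorted <%R k) (hn : all (fun x => 0 < x)%N n) :
  ((has_depth (dimLam k n) 1 <-> (k`_0 = -1 /\ nth 0%N n 0 = 1%N))
   /\ (has_depth (dimLam k n) 1 -> has_depth (dimW k n) (last 0 k + 1)))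
  /\
  ((has_depth (dimLam k n) 0 <-> 0 <= k`_0)
   /\ (has_depth (dimLam k n) 0 ->
        (has_depth (dimW k n) 0 <-> k = [:: 0])
        /\ (has_depth (dimW k n) 1 <-> (k = [:: 0; 1] \/ k = [:: 1])))).
Proof.
have hW := @W_depth k n _ hm hsz hn hk.
move: hm hsz hk hn hW; case: k => [//|k0 k']; case: n => [//|n0 n'].
move=> _ hsz /= hk /andP [hn0 hn'] hW.
split; split.
- rewrite lam_depth; split.
    by move=> h; apply/(@mw_m1 k0 k' n0 n' hk hn0); rewrite -[mw _ _]opprK -h.
  by move=> /(@mw_m1 k0 k' n0 n' hk hn0) ->.
- rewrite lam_depth hW => h; lra.
- rewrite lam_depth; split.
    by move=> h; apply/(@mw_zero k0 k' n0 n' hk hn0); rewrite -[mw _ _]opprK -h oppr0.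
  by move=> /(@mw_zero k0 k' n0 n' hk hn0) ->; rewrite oppr0.
- rewrite lam_depth => h.
  have hm0 : mw (k0 :: k') (n0 :: n') = 0 by rewrite -[mw _ _]opprK -h oppr0.
  have hk0 : 0 <= k0 by apply/(@mw_zero k0 k' n0 n' hk hn0).
  have [L0 L1] := @last_cases k0 k' hk hk0.
  rewrite !hW hm0 !subr0; split.
    by split => e; [apply/L0; exact: esym e | exact: esym (proj2 L0 e)].
  by split => e; [apply/L1; exact: esym e | exact: esym (proj2 L1 e)].
Qed.
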